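(* Let $q\ge1$ be an integer. Suppose there are constants $\varepsilon,\delta>0$ and a Borel set $K\subset[0,1)$ such that: (i) $e(q,x;\varepsilon,\delta)\le1$ for $x\in K$ and $e(q,x;\varepsilon,\delta)\le2$ for $x\in[0,1)\setminus K$; (ii) if $(\mathbf{u},\mathbf{v})\in E(q,x;\varepsilon,\delta)$ for some $x\in[0,1)\setminus K$ with $\mathbf{u}\ne\mathbf{v}$, then $x(\mathbf{u})\in K$ or $x(\mathbf{v})\in K$. Then $\sigma(q)\le(\sqrt5+1)/2$.
   Context: Standing setup: $b\ge2$ integer, $\mathcal{A}=\{0,\dots,b-1\}$, $\gamma\in(1/b,1)$, $\psi$ a $\mathbb{Z}$-periodic $C^1$ function. $S(x,\mathbf{i})=\sum_{n\ge1}\gamma^{n-1}\psi\big(\frac{x+i_1+i_2b+\cdots+i_nb^{n-1}}{b^n}\big)$, $S'=\partial_xS$. For $\mathbf{u}\in\mathcal{A}^q$, $x(\mathbf{u})=(x+u_1+u_2b+\cdots+u_qb^{q-1})/b^q$. Sequences $\mathbf{i},\mathbf{j}$ are $(\varepsilon,\delta)$-tangent at $x_0$ if $|S(x_0,\mathbf{i})-S(x_0,\mathbf{j})|\le\varepsilon$ and $|S'(x_0,\mathbf{i})-S'(x_0,\mathbf{j})|\le\delta$. $E(q,x_0;\varepsilon,\delta)$: pairs $(\mathbf{k},\mathbf{l})\in\mathcal{A}^q\times\mathcal{A}^q$ such that some concatenations $\mathbf{ku},\mathbf{lv}$ are $(\varepsilon,\delta)$-tangent at $x_0$; $e(q,x_0;\varepsilon,\delta)=\max_{\mathbf{k}}\#\{\mathbf{l}:(\mathbf{k},\mathbf{l})\in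 E(q,x_0;\varepsilon,\delta)\}$. Weight function: measurable $\omega:[0,1)\to(0,\infty)$ with $\omega,1/\omega$ bounded. Admissible testing function of order $q$: measurable $V:[0,1)\times\mathcal{A}^q\times\mathcal{A}^q\to[0,\infty)$ such that for some $\varepsilon,\delta>0$, $V(x,\mathbf{u},\mathbf{v})V(x,\mathbf{v},\mathbf{u})\ge1$ whenever $x\in[0,1)$ and $(\mathbf{u},\mathbf{v})\in E(q,x;\varepsilon,\delta)$. $\Sigma_{V,\omega}(x)=\sup_{\mathbf{u}}\frac{\omega(x)}{\omega(x(\mathbf{u}))}\sum_{\mathbf{v}}V(x,\mathbf{u},\mathbf{v})$; $\sigma(q)=\inf_{\omega,V}\|\Sigma_{V,\omega}\|_\infty$. *)

(* Defs.v *)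
From Stdlib Require Import Reals Lra List Arith ClassicalEpsilon.
Import ListNotations.
Open Scope R_scope.

Definition decP (P : Prop) : bool :=
  if excluded_middle_informative P then true else false.

Inductive Borel : (R -> Prop) -> Prop :=
| Borel_interval (a c : R) : Borel (fun x => a < x < c)
| Borel_compl (A : R -> Prop) : Borel A -> Borel (fun x => ~ A x)
| Borel_union (F : nat -> R -> Prop) :
    (forall n, Borel (F n)) -> Borel (fun x => exists n, F n x)
| Borel_ext (A B : R -> Prop) : Borel A -> (forall x, A x <-> B x) -> Borel B.

Definition null_set (A : R -> Prop) : Prop :=
  forall eps, 0 < eps ->
    exists a c : nat -> R,
      (forall n, a n <= c n) /\
      (forall x, A x -> exists n, a n < x < c n) /\
      (forall N, sum_f_R0 (fun n => c n - a n) N <= eps).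

Definition leb_measurable (A : R -> Prop) : Prop :=
  exists B N, Borel B /\ null_set N /\
    (forall x, (A x /\ ~ B x) \/ (B x /\ ~ A x) -> N x).

Definition measurable01 (f : R -> R) : Prop :=
  forall B, Borel B -> leb_measurable (fun x => 0 <= x < 1 /\ B (f x)).

Definition ess_bounded_by (f : R -> R) (M : R) : Prop :=
  null_set (fun x => 0 <= x < 1 /\ M < f x).

(** Digit sequences i = (i_1, i_2, ...) in A^N, stored 0-indexed: i n = i_{n+1}. *)
Definition digit_seq (b : nat) (i : nat -> nat) : Prop := forall n, (i n < b)%nat.

Definition word (b q : nat) (u : list nat) : Prop :=
  length u = q /\ Forall (fun d => (d < b)%nat) u.

Fixpoint words (b q : nat) : list (list nat) :=
  match q with
  | O => [[]]
  | S q' => flat_map (fun d => map (fun w => d :: w) (words b q')) (seq 0 b)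
  end.

Definition concat (k : list nat) (u : nat -> nat) : nat -> nat :=
  fun n => if Nat.ltb n (length k) then nth n k 0%nat else u (n - length k)%nat.

Definition xmap (b : nat) (x : R) (u : list nat) : R :=
  (x + fold_right Rplus 0
         (map (fun m => INR (nth m u 0%nat) * INR b ^ m) (seq 0 (length u))))
  / INR b ^ length u.

(** S(x,i) = sum_{n>=1} gamma^{n-1} psi((x + i_1 + ... + i_n b^{n-1}) / b^n). *)
Definition S_term (b : nat) (gamma : R) (psi : R -> R) (x : R) (i : nat -> nat)
  (k : nat) : R :=
  gamma ^ k *
  psi ((x + sum_f_R0 (fun m => INR (i m) * INR b ^ m) k) / INR b ^ (S k)).

Definition S_fun (b : nat) (gamma : R) (psi : R -> R) (x : R) (i : nat -> nat) : R :=
  epsilon (inhabits 0)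
    (fun l => Un_cv (fun N => sum_f_R0 (S_term b gamma psi x i) N) l).

Definition tangent (b : nat) (gamma : R) (psi : R -> R)
  (eps delta x0 : R) (i j : nat -> nat) : Prop :=
  Rabs (S_fun b gamma psi x0 i - S_fun b gamma psi x0 j) <= eps /\
  exists di dj,
    derivable_pt_lim (fun x => S_fun b gamma psi x i) x0 di /\
    derivable_pt_lim (fun x => S_fun b gamma psi x j) x0 dj /\
    Rabs (di - dj) <= delta.

Definition inE (b : nat) (gamma : R) (psi : R -> R) (q : nat) (x0 eps delta : R)
  (k l : list nat) : Prop :=
  word b q k /\ word b q l /\
  exists u v, digit_seq b u /\ digit_seq b v /\
    tangent b gamma psi eps delta x0 (concat k u) (concat l v).

Definition e_num (b : nat) (gamma : R) (psi : R -> R) (q : nat) (x0 eps delta : R)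
  : nat :=
  fold_right Nat.max 0%nat
    (map (fun k => length (filter (fun l => decP (inE b gamma psi q x0 eps delta k l))
                                  (words b q)))
         (words b q)).

Definition weight (omega : R -> R) : Prop :=
  measurable01 omega /\
  (forall x, 0 <= x < 1 -> 0 < omega x) /\
  (exists M, forall x, 0 <= x < 1 -> omega x <= M /\ / omega x <= M).

Definition admissible (b : nat) (gamma : R) (psi : R -> R) (q : nat)
  (V : R -> list nat -> list nat -> R) : Prop :=
  (forall u v, word b q u -> word b q v -> measurable01 (fun x => V x u v)) /\
  (forall x u v, 0 <= x < 1 -> word b q u -> word b q v -> 0 <= V x u v) /\
  exists eps delta, 0 < eps /\ 0 < delta /\
    forall x u v, 0 <= x < 1 ->
      inE b gamma psi q x eps delta u v -> 1 <= V x u v * V x v u.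

(** Sigma_{V,omega}(x) = max_u omega(x)/omega(x(u)) * sum_v V(x,u,v)
    (all terms are >= 0, so folding Rmax from 0 gives the maximum). *)
Definition Sigma (b q : nat) (omega : R -> R) (V : R -> list nat -> list nat -> R)
  (x : R) : R :=
  fold_right Rmax 0
    (map (fun u => omega x / omega (xmap b x u) *
                   fold_right Rplus 0 (map (fun v => V x u v) (words b q)))
         (words b q)).

(** sigma(q) <= c, where sigma(q) = inf_{omega,V} ||Sigma_{V,omega}||_oo. *)
Definition sigma_le (b : nat) (gamma : R) (psi : R -> R) (q : nat) (c : R) : Prop :=
  forall eta, 0 < eta ->
    exists omega V, weight omega /\ admissible b gamma psi q V /\
      ess_bounded_by (Sigma b q omega V) (c + eta).

(* Main.v *)
Require Import Defs.
From Stdlib Require Import Reals Lra List Arith ClassicalEpsilon Classical Lia ZArith.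
Import ListNotations.
Open Scope R_scope.

Lemma Borel_empty : Borel (fun _ => False).
Proof. apply (Borel_ext (fun x => 0 < x < 0)). apply Borel_interval.
intros x; split; [lra|tauto]. Qed.

Lemma Borel_full : Borel (fun _ => True).
Proof. apply (Borel_ext (fun x => ~ False)). apply Borel_compl, Borel_empty.
intros; tauto. Qed.

Lemma Borel_const (P : Prop) : Borel (fun _ => P).
Proof. destruct (classic P) as [H|H].
- apply (Borel_ext _ _ Borel_full). intros; tauto.
- apply (Borel_ext _ _ Borel_empty). intros; tauto. Qed.

Lemma Borel_or A B : Borel A -> Borel B -> Borel (fun x => A x \/ B x).
Proof. intros HA HB.
apply (Borel_ext (fun x => exists n, (match n with O => A | _ => B end) x)).
- apply Borel_union. intros [|n]; auto.
- intros x; split.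
  + intros [[|n] H]; auto.
  + intros [H|H]; [exists O|exists 1%nat]; auto. Qed.

Lemma Borel_and A B : Borel A -> Borel B -> Borel (fun x => A x /\ B x).
Proof. intros HA HB.
apply (Borel_ext (fun x => ~ ((~ A x) \/ (~ B x)))).
- apply Borel_compl, Borel_or; apply Borel_compl; auto.
- intros x; tauto. Qed.

Lemma Borel_not A : Borel A -> Borel (fun x => ~ A x).
Proof. apply Borel_compl. Qed.

Lemma Borel_if (P A C : R -> Prop) :
  Borel P -> Borel A -> Borel C ->
  Borel (fun x => (P x /\ A x) \/ (~ P x /\ C x)).
Proof. intros; apply Borel_or; apply Borel_and; auto; apply Borel_not; auto. Qed.

Lemma Borel_exists_list {T} (l : list T) (P : T -> R -> Prop) :
  (forall a, In a l -> Borel (P a)) -> Borel (fun x => exists a, In a l /\ P a x).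
Proof. induction l as [|a l IH]; intros H.
- apply (Borel_ext _ _ Borel_empty). intros x; split; [tauto|]. intros [a [[] _]].
- apply (Borel_ext (fun x => P a x \/ exists a', In a' l /\ P a' x)).
  + apply Borel_or; [apply H; simpl; auto|apply IH; intros; apply H; simpl; auto].
  + intros x; split.
    * intros [H1|[a' [H1 H2]]]; [exists a|exists a']; simpl; auto.
    * intros [a' [[<-|H1] H2]]; auto. right; exists a'; auto. Qed.

Lemma Borel_01 : Borel (fun x => 0 <= x < 1).
Proof. apply (Borel_ext (fun x => (-1 < x < 1) /\ ~ (-1 < x < 0))).
- apply Borel_and; [apply Borel_interval|apply Borel_not, Borel_interval].
- intros x; split; intros; lra. Qed.

Lemma Borel_affine (A : R -> Prop) : Borel A ->
  forall c d, 0 < d -> Borel (fun x => A ((x + c) / d)).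
Proof. induction 1; intros cc d Hd.
- apply (Borel_ext (fun x => a * d - cc < x < c * d - cc)). apply Borel_interval.
  intros x. assert (Hx : x = ((x + cc) / d) * d - cc) by (field; lra).
  set (w := (x + cc) / d) in *. split; intros [H1 H2]; split; nra.
- apply Borel_compl; auto.
- apply Borel_union; intros n; apply H0; auto.
- apply (Borel_ext _ _ (IHBorel cc d Hd)). intros; apply H0.
Qed.

Definition openR (U : R -> Prop) := forall x, U x -> exists r, 0 < r /\ forall y, Rabs (y - x) < r -> U y.

Lemma Borel_open U : openR U -> Borel U.
Proof. intros HU.
set (J := fun (m c a : nat) (y : R) => INR a / (INR c + 1) - INR m < y < (INR a + 2) / (INR c + 1) - INR m).
apply (Borel_ext (fun x => exists m, exists c, exists a, (forall y, J m c a y -> U y) /\ J m c a x)).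
- do 3 (apply Borel_union; intro). apply Borel_and. apply Borel_const. apply Borel_interval.
- intros x; split.
  + intros [m [c [a [H1 H2]]]]; auto.
  + intros Ux. destruct (HU x Ux) as [r [Hr Hy]].
    destruct (archimed (2 / r)) as [Hc _].
    destruct (archimed (Rabs x + 1)) as [Hm _].
    set (c := Z.to_nat (up (2/r))). set (m := Z.to_nat (up (Rabs x + 1))).
    assert (Hc' : 2 / r < INR c).
    { unfold c. rewrite INR_IZR_INZ, Z2Nat.id; auto. apply le_IZR. assert (0 < 2/r) by (apply Rdiv_lt_0_compat; lra). lra. }
    assert (Hm' : Rabs x + 1 < INR m).
    { unfold m. rewrite INR_IZR_INZ, Z2Nat.id; auto. apply le_IZR. pose proof (Rabs_pos x). lra. }
    set (t := (x + INR m) * (INR c + 1)).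
    assert (Hc0 : 0 <= INR c) by apply pos_INR.
    assert (Ht : 1 <= t). { unfold t. pose proof (Rle_abs (-x)). rewrite Rabs_Ropp in H.
      assert (1 <= x + INR m) by lra.
      assert (0 <= (x + INR m) * INR c) by (apply Rmult_le_pos; lra). lra. }
    destruct (base_Int_part t) as [Hz1 Hz2].
    set (z := Int_part t) in *.
    assert (Hz : (1 <= z)%Z). { apply le_IZR. assert (0 < IZR z) by lra.
      apply lt_IZR in H. apply IZR_le. lia. }
    exists m, c, (Z.to_nat (z - 1)).
    assert (Ha : INR (Z.to_nat (z - 1)) = IZR z - 1).
    { rewrite INR_IZR_INZ, Z2Nat.id by lia. rewrite minus_IZR. reflexivity. }
    assert (Hc1 : 0 < INR c + 1) by lra.
    assert (HJ : J m c (Z.to_nat (z - 1)) x).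
    { unfold J. rewrite Ha. split.
      - assert (E : (IZR z - 1) / (INR c + 1) = (IZR z - 1) * / (INR c + 1)) by reflexivity.
        assert (x + INR m = t / (INR c + 1)) by (unfold t; field; lra).
        assert ((IZR z - 1) / (INR c + 1) < t / (INR c + 1)) by (apply Rmult_lt_compat_r; [apply Rinv_0_lt_compat; lra|lra]). lra.
      - assert (x + INR m = t / (INR c + 1)) by (unfold t; field; lra).
        assert (t / (INR c + 1) < (IZR z - 1 + 2) / (INR c + 1)) by (apply Rmult_lt_compat_r; [apply Rinv_0_lt_compat; lra|lra]). lra. }
    split; auto.
    intros y Hyy. apply Hy.
    unfold J in *. rewrite Ha in Hyy, HJ.
    assert (Hw : (IZR z - 1 + 2) / (INR c + 1) - INR m - ((IZR z - 1) / (INR c + 1) - INR m) = 2 / (INR c + 1)) by (field; lra).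
    assert (2 / (INR c + 1) < r).
    { assert (2 < r * (INR c + 1)). { apply (Rmult_lt_reg_r (/ r)). apply Rinv_0_lt_compat; lra.
        replace (r * (INR c + 1) * / r) with (INR c + 1) by (field; lra). unfold Rdiv in Hc'. lra. }
      apply (Rmult_lt_reg_r (INR c + 1)); auto. unfold Rdiv; rewrite Rmult_assoc, Rinv_l by lra. lra. }
    apply Rabs_def1; lra.
Qed.
Lemma cont_gt (g : R -> R) e x : continuity_pt g x -> g x > e ->
  exists r, 0 < r /\ forall y, Rabs (y - x) < r -> g y > e.
Proof. intros Hc Hx.
unfold continuity_pt, continue_in, limit1_in, limit_in in Hc.
destruct (Hc (g x - e)) as [al [Hal H]]; [lra|].
exists al; split; auto. intros y Hy.
destruct (Req_dec y x) as [->|Hne]; auto.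
assert (dist R_met (g y) (g x) < g x - e).
{ apply H. split. split; [exact I|auto]. simpl. unfold Rdist. auto. }
simpl in H0. unfold Rdist in H0. pose proof (Rle_abs (- (g y - g x))). rewrite Rabs_Ropp in H1. lra.
Qed.

Lemma partial_bound (a : nat -> R) C r : 0 <= r < 1 -> (forall k, Rabs (a k) <= C * r ^ k) ->
  forall n k, Rabs (sum_f_R0 a (n + k) - sum_f_R0 a n) <= C * (r ^ (S n) - r ^ (S (n + k))) / (1 - r).
Proof. intros Hr Ha n k. induction k.
- rewrite Nat.add_0_r. unfold Rminus at 1. rewrite Rplus_opp_r, Rabs_R0.
  unfold Rminus; rewrite Rplus_opp_r. unfold Rdiv. rewrite Rmult_0_r, Rmult_0_l. lra.
- rewrite Nat.add_succ_r. simpl sum_f_R0.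
  replace (sum_f_R0 a (n + k) + a (S (n + k)) - sum_f_R0 a n) with
    ((sum_f_R0 a (n + k) - sum_f_R0 a n) + a (S (n + k))) by ring.
  eapply Rle_trans; [apply Rabs_triang|].
  eapply Rle_trans; [apply Rplus_le_compat; [apply IHk|apply Ha]|].
  right. simpl. field. lra.
Qed.

Lemma geom_series (a : nat -> R) C r : 0 <= r < 1 -> (forall k, Rabs (a k) <= C * r ^ k) ->
  exists l, Un_cv (fun n => sum_f_R0 a n) l /\
    forall n, Rabs (l - sum_f_R0 a n) <= C * r ^ (S n) / (1 - r).
Proof. intros Hr Ha.
assert (HC : 0 <= C). { pose proof (Ha O). simpl in H. pose proof (Rabs_pos (a O)). lra. }
assert (Hpb : forall n m, (n <= m)%nat -> Rabs (sum_f_R0 a m - sum_f_R0 a n) <= C * r ^ (S n) / (1 - r)).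
{ intros n m Hnm. replace m with (n + (m - n))%nat by lia.
  eapply Rle_trans; [apply (partial_bound a C r Hr Ha)|].
  unfold Rdiv. apply Rmult_le_compat_r. apply Rlt_le, Rinv_0_lt_compat; lra.
  apply Rmult_le_compat_l; auto. pose proof (pow_le r (S (n + (m - n))) (proj1 Hr)). lra. }
assert (Hpow : forall n m, (n <= m)%nat -> r ^ m <= r ^ n).
{ intros n m Hnm. replace m with (n + (m - n))%nat by lia. rewrite pow_add.
  pose proof (pow_le r n (proj1 Hr)). pose proof (pow_le r (m - n) (proj1 Hr)).
  assert (r ^ (m - n) <= 1) by (rewrite <- (pow1 (m - n)); apply pow_incr; lra). nra. }
destruct (R_complete (fun n => sum_f_R0 a n)) as [l Hl].
- intros eps Heps.
  destruct (pow_lt_1_zero r) with (y := eps * (1 - r) / (C + 1)) as [N HN].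
  + rewrite Rabs_pos_eq; lra.
  + apply Rdiv_lt_0_compat; [apply Rmult_lt_0_compat|]; lra.
  + exists N. intros n m Hn Hm. unfold Rdist.
    assert (Hb : forall n m, (N <= n)%nat -> (n <= m)%nat -> Rabs (sum_f_R0 a m - sum_f_R0 a n) < eps).
    { intros n' m' Hn' Hnm'. eapply Rle_lt_trans; [apply Hpb; auto|].
      assert (r ^ S n' <= r ^ N) by (apply Hpow; lia).
      assert (Hr' : r ^ N < eps * (1 - r) / (C + 1)). { pose proof (HN N (le_n N)). rewrite Rabs_pos_eq in H0; auto. apply pow_le; lra. }
      apply (Rmult_lt_reg_r (1 - r)); [lra|]. unfold Rdiv. rewrite Rmult_assoc, Rinv_l by lra.
      assert (C * r ^ S n' <= C * (eps * (1 - r) / (C + 1))). { apply Rmult_le_compat_l; auto. lra. }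
      assert (C * (eps * (1 - r) / (C + 1)) < eps * (1 - r)).
      { apply (Rmult_lt_reg_r (C + 1)); [lra|]. replace (C * (eps * (1 - r) / (C + 1)) * (C + 1)) with (C * (eps * (1 - r))) by (field; lra).
        assert (0 < eps * (1 - r)) by (apply Rmult_lt_0_compat; lra). nra. }
      lra. }
    destruct (le_lt_dec n m).
    * rewrite <- Rabs_Ropp. replace (- (sum_f_R0 a n - sum_f_R0 a m)) with (sum_f_R0 a m - sum_f_R0 a n) by ring. apply Hb; lia.
    * apply Hb; lia.
- exists l; split; auto.
  intros n. apply Rnot_lt_le. intro Hc.
  set (d := Rabs (l - sum_f_R0 a n) - C * r ^ S n / (1 - r)).
  destruct (Hl d) as [N HN]; [unfold d; lra|].
  pose proof (HN (max N n) (Nat.le_max_l _ _)). unfold Rdist in H.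
  pose proof (Hpb n (max N n) (Nat.le_max_r _ _)).
  pose proof (Rabs_triang (l - sum_f_R0 a (max N n)) (sum_f_R0 a (max N n) - sum_f_R0 a n)).
  replace (l - sum_f_R0 a (max N n) + (sum_f_R0 a (max N n) - sum_f_R0 a n)) with (l - sum_f_R0 a n) in H1 by ring.
  rewrite <- Rabs_Ropp in H. replace (- (sum_f_R0 a (max N n) - l)) with (l - sum_f_R0 a (max N n)) in H by ring.
  unfold d in H. lra.
Qed.

Lemma periodic_Z (f : R -> R) : (forall x, f (x + 1) = f x) -> forall t z, f (t + IZR z) = f t.
Proof. intros Hp.
assert (Hn : forall t n, f (t + INR n) = f t).
{ intros t n; induction n. simpl. rewrite Rplus_0_r; auto.
  rewrite S_INR. replace (t + (INR n + 1)) with (t + INR n + 1) by ring. rewrite Hp; auto. }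
intros t z. destruct (Z.le_ge_cases 0 z).
- replace z with (Z.of_nat (Z.to_nat z)) by lia. rewrite <- INR_IZR_INZ. auto.
- replace z with (- Z.of_nat (Z.to_nat (- z)))%Z by lia. rewrite opp_IZR, <- INR_IZR_INZ.
  rewrite <- (Hn (t + - INR (Z.to_nat (- z))) (Z.to_nat (-z))). f_equal. ring.
Qed.

Lemma periodic_bounded (f : R -> R) : (forall x, f (x + 1) = f x) -> (forall x, continuity_pt f x) ->
  exists M, forall y, Rabs (f y) <= M.
Proof. intros Hp Hc.
destruct (continuity_ab_maj f 0 1) as [xM [HM _]]; [lra|auto|].
destruct (continuity_ab_min f 0 1) as [xm [Hm _]]; [lra|auto|].
exists (Rmax (Rabs (f xM)) (Rabs (f xm))). intros y.
destruct (base_Int_part y) as [H1 H2].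
assert (E : f y = f (y - IZR (Int_part y))).
{ rewrite <- (periodic_Z f Hp (y - IZR (Int_part y)) (Int_part y)). f_equal; ring. }
rewrite E.
set (t := y - IZR (Int_part y)).
assert (0 <= t <= 1) by (unfold t; lra).
specialize (HM t H). specialize (Hm t H).
apply Rabs_le. split.
- pose proof (Rle_abs (- f xm)). rewrite Rabs_Ropp in H0. pose proof (Rmax_r (Rabs (f xM)) (Rabs (f xm))). lra.
- pose proof (Rle_abs (f xM)). pose proof (Rmax_l (Rabs (f xM)) (Rabs (f xm))). lra.
Qed.

Lemma deriv_periodic (psi dpsi : R -> R) : (forall x, psi (x + 1) = psi x) ->
  (forall x, derivable_pt_lim psi x (dpsi x)) -> forall x, dpsi (x + 1) = dpsi x.
Proof. intros Hp Hd x. apply (uniqueness_limite psi x); auto.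
intros eps Heps. destruct (Hd (x + 1) eps Heps) as [del Hdel]. exists del.
intros h Hh Hhd. specialize (Hdel h Hh Hhd).
replace (x + 1 + h) with ((x + h) + 1) in Hdel by ring. rewrite !Hp in Hdel. auto.
Qed.

Definition argk (b : nat) (x : R) (i : nat -> nat) (k : nat) : R :=
  (x + sum_f_R0 (fun m => INR (i m) * INR b ^ m) k) / INR b ^ (S k).

Definition D_term (b : nat) (gamma : R) (dpsi : R -> R) (x : R) (i : nat -> nat) (k : nat) : R :=
  gamma ^ k * (dpsi (argk b x i k) / INR b ^ (S k)).

Definition D_fun (b : nat) (gamma : R) (dpsi : R -> R) (x : R) (i : nat -> nat) : R :=
  epsilon (inhabits 0) (fun l => Un_cv (fun N => sum_f_R0 (D_term b gamma dpsi x i) N) l).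

Lemma dpl_ext f g x l : (forall y, f y = g y) -> derivable_pt_lim f x l -> derivable_pt_lim g x l.
Proof. intros E H eps He. destruct (H eps He) as [d Hd]. exists d. intros h H1 H2.
rewrite <- !E. auto. Qed.

Lemma dpl_affine c A x : A <> 0 -> derivable_pt_lim (fun y => (y + c) / A) x (/ A).
Proof. intros HA eps He. exists (mkposreal 1 Rlt_0_1). intros h Hh _.
replace (((x + h + c) / A - (x + c) / A) / h - / A) with 0 by (field; auto).
rewrite Rabs_R0; auto. Qed.

Lemma INRb_pos b : (2 <= b)%nat -> forall k, 0 < INR b ^ k.
Proof. intros Hb k. apply pow_lt. apply lt_0_INR. lia. Qed.

Lemma deriv_term b gamma psi dpsi i k x : (2 <= b)%nat ->
  (forall x, derivable_pt_lim psi x (dpsi x)) ->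
  derivable_pt_lim (fun y => S_term b gamma psi y i k) x (D_term b gamma dpsi x i k).
Proof. intros Hb Hd. unfold S_term, D_term, argk.
set (c := sum_f_R0 (fun m => INR (i m) * INR b ^ m) k).
set (A := INR b ^ S k).
assert (HA : 0 < A) by (apply INRb_pos; auto).
assert (H1 := derivable_pt_lim_comp (fun y => (y + c) / A) psi x (/ A) (dpsi ((x + c) / A))
   (dpl_affine c A x ltac:(lra)) (Hd _)).
assert (H2 := derivable_pt_lim_scal _ (gamma ^ k) x _ H1).
replace (gamma ^ k * (dpsi ((x + c) / A) / A)) with (gamma ^ k * (dpsi ((x + c) / A) * / A)) by reflexivity.
eapply dpl_ext; [|exact H2]. intros y; reflexivity.
Qed.

Lemma deriv_partial b gamma psi dpsi i x : (2 <= b)%nat ->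
  (forall x, derivable_pt_lim psi x (dpsi x)) ->
  forall n, derivable_pt_lim (fun y => sum_f_R0 (S_term b gamma psi y i) n) x
      (sum_f_R0 (D_term b gamma dpsi x i) n).
Proof. intros Hb Hd n. induction n.
- simpl. apply deriv_term; auto.
- simpl. apply (derivable_pt_lim_plus (fun y => sum_f_R0 (S_term b gamma psi y i) n)
   (fun y => S_term b gamma psi y i (S n))); auto. apply deriv_term; auto.
Qed.

Lemma S_term_bound b gamma psi M x i k : 0 <= gamma -> (forall y, Rabs (psi y) <= M) ->
  Rabs (S_term b gamma psi x i k) <= M * gamma ^ k.
Proof. intros Hg Hp. unfold S_term. rewrite Rabs_mult, Rabs_pos_eq by (apply pow_le; auto).
rewrite Rmult_comm. apply Rmult_le_compat_r; auto. apply pow_le; auto. Qed.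

Lemma D_term_bound b gamma dpsi M x i k : (2 <= b)%nat -> 0 <= gamma -> (forall y, Rabs (dpsi y) <= M) ->
  Rabs (D_term b gamma dpsi x i k) <= (M / INR b) * (gamma / INR b) ^ k.
Proof. intros Hb Hg Hp. unfold D_term.
assert (HB : 0 < INR b) by (apply lt_0_INR; lia).
assert (HBk := INRb_pos b Hb (S k)).
assert (Hgk : 0 <= gamma ^ k) by (apply pow_le; auto).
replace (gamma ^ k * (dpsi (argk b x i k) / INR b ^ S k)) with ((gamma ^ k / INR b ^ S k) * dpsi (argk b x i k)) by (field; lra).
replace (M / INR b * (gamma / INR b) ^ k) with ((gamma ^ k / INR b ^ S k) * M).
2:{ unfold Rdiv. rewrite Rpow_mult_distr, pow_inv. simpl. assert (HBk0 := INRb_pos b Hb k). field. split; lra. }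
rewrite Rabs_mult, Rabs_pos_eq. apply Rmult_le_compat_l; auto. unfold Rdiv. apply Rmult_le_pos; auto. apply Rlt_le, Rinv_0_lt_compat; auto.
unfold Rdiv. apply Rmult_le_pos; auto. apply Rlt_le, Rinv_0_lt_compat; auto.
Qed.

From Stdlib Require Import FunctionalExtensionality.
Lemma Rdiv_le_0_compat a c : 0 <= a -> 0 < c -> 0 <= a / c.
Proof. intros. unfold Rdiv. apply Rmult_le_pos; auto. apply Rlt_le, Rinv_0_lt_compat; auto. Qed.

Lemma small_tail C r : 0 <= C -> 0 <= r < 1 -> forall eps, 0 < eps ->
  exists N, forall n, (N <= n)%nat -> C * r ^ n / (1 - r) < eps.
Proof. intros HC Hr eps He.
destruct (pow_lt_1_zero r) with (y := eps * (1 - r) / (C + 1)) as [N HN].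
+ rewrite Rabs_pos_eq; lra.
+ apply Rdiv_lt_0_compat; [apply Rmult_lt_0_compat|]; lra.
+ exists N. intros n Hn. specialize (HN n Hn). rewrite Rabs_pos_eq in HN by (apply pow_le; lra).
  apply (Rmult_lt_reg_r (1 - r)); [lra|]. unfold Rdiv. rewrite Rmult_assoc, Rinv_l by lra.
  assert (C * r ^ n <= C * (eps * (1 - r) / (C + 1))). { apply Rmult_le_compat_l; auto. lra. }
  assert (C * (eps * (1 - r) / (C + 1)) < eps * (1 - r)).
  { apply (Rmult_lt_reg_r (C + 1)); [lra|]. replace (C * (eps * (1 - r) / (C + 1)) * (C + 1)) with (C * (eps * (1 - r))) by (field; lra).
    assert (0 < eps * (1 - r)) by (apply Rmult_lt_0_compat; lra). nra. }
  lra.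
Qed.

Lemma S_spec b gamma psi M x i : 0 <= gamma < 1 -> (forall y, Rabs (psi y) <= M) ->
  Un_cv (fun N => sum_f_R0 (S_term b gamma psi x i) N) (S_fun b gamma psi x i) /\
  forall n, Rabs (S_fun b gamma psi x i - sum_f_R0 (S_term b gamma psi x i) n) <= M * gamma ^ (S n) / (1 - gamma).
Proof. intros Hg HM.
destruct (geom_series (S_term b gamma psi x i) M gamma Hg) as [l [Hl Ht]].
{ intros k; apply S_term_bound; auto; lra. }
assert (Hs : Un_cv (fun N => sum_f_R0 (S_term b gamma psi x i) N) (S_fun b gamma psi x i)).
{ unfold S_fun. apply (epsilon_spec (inhabits 0) (fun l => Un_cv _ l)). exists l; auto. }
assert (S_fun b gamma psi x i = l) by (eapply UL_sequence; eauto).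
rewrite H. auto. Qed.

Lemma D_spec b gamma dpsi M x i : (2 <= b)%nat -> 0 <= gamma < 1 -> (forall y, Rabs (dpsi y) <= M) ->
  Un_cv (fun N => sum_f_R0 (D_term b gamma dpsi x i) N) (D_fun b gamma dpsi x i) /\
  forall n, Rabs (D_fun b gamma dpsi x i - sum_f_R0 (D_term b gamma dpsi x i) n) <= (M / INR b) * (gamma / INR b) ^ (S n) / (1 - gamma / INR b).
Proof. intros Hb Hg HM.
assert (HB : 2 <= INR b) by (apply (le_INR 2); auto).
assert (Hr : 0 <= gamma / INR b < 1).
{ split. apply Rdiv_le_0_compat; lra. apply (Rmult_lt_reg_r (INR b)); [lra|]. unfold Rdiv. rewrite Rmult_assoc, Rinv_l by lra. lra. }
destruct (geom_series (D_term b gamma dpsi x i) (M / INR b) (gamma / INR b) Hr) as [l [Hl Ht]].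
{ intros k; apply D_term_bound; auto; lra. }
assert (Hs : Un_cv (fun N => sum_f_R0 (D_term b gamma dpsi x i) N) (D_fun b gamma dpsi x i)).
{ unfold D_fun. apply (epsilon_spec (inhabits 0) (fun l => Un_cv _ l)). exists l; auto. }
assert (D_fun b gamma dpsi x i = l) by (eapply UL_sequence; eauto).
rewrite H. auto. Qed.

Lemma Mpos_of (f : R -> R) M : (forall y, Rabs (f y) <= M) -> 0 <= M.
Proof. intros H. pose proof (H 0). pose proof (Rabs_pos (f 0)). lra. Qed.

Lemma D_CVU b gamma dpsi M i c : (2 <= b)%nat -> 0 <= gamma < 1 -> (forall y, Rabs (dpsi y) <= M) ->
  CVU (fun n y => sum_f_R0 (D_term b gamma dpsi y i) n) (fun y => D_fun b gamma dpsi y i) c (mkposreal 1 Rlt_0_1).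
Proof. intros Hb Hg HM eps He.
assert (HB : 2 <= INR b) by (apply (le_INR 2); auto).
assert (Hr : 0 <= gamma / INR b < 1).
{ split. apply Rdiv_le_0_compat; lra. apply (Rmult_lt_reg_r (INR b)); [lra|]. unfold Rdiv. rewrite Rmult_assoc, Rinv_l by lra. lra. }
assert (HC : 0 <= M / INR b) by (apply Rdiv_le_0_compat; [eapply Mpos_of; eauto|lra]).
destruct (small_tail (M / INR b) (gamma / INR b) HC Hr eps He) as [N HN].
exists N. intros n y Hn _.
destruct (D_spec b gamma dpsi M y i Hb Hg HM) as [_ Ht].
eapply Rle_lt_trans; [apply Ht|]. apply HN. lia.
Qed.

Lemma S_deriv b gamma psi dpsi M M' x i : (2 <= b)%nat -> 0 <= gamma < 1 ->
  (forall y, Rabs (psi y) <= M) -> (forall y, Rabs (dpsi y) <= M') ->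
  (forall x, derivable_pt_lim psi x (dpsi x)) ->
  derivable_pt_lim (fun y => S_fun b gamma psi y i) x (D_fun b gamma dpsi x i).
Proof. intros Hb Hg HM HM' Hd.
apply (CVU_derivable (fun n y => sum_f_R0 (S_term b gamma psi y i) n)
  (fun n y => sum_f_R0 (D_term b gamma dpsi y i) n)
  (fun y => S_fun b gamma psi y i) (fun y => D_fun b gamma dpsi y i) x (mkposreal 1 Rlt_0_1)).
- apply D_CVU with M'; auto.
- intros y _. apply (S_spec b gamma psi M y i Hg HM).
- intros n y _. apply deriv_partial; auto.
- apply Boule_center.
Qed.

Lemma cont_ext f g x : (forall y, f y = g y) -> continuity_pt f x -> continuity_pt g x.
Proof. intros E H. replace g with f; auto. apply functional_extensionality; auto. Qed.

Lemma D_term_cont b gamma dpsi i k x : (2 <= b)%nat -> continuity dpsi ->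
  continuity_pt (fun y => D_term b gamma dpsi y i k) x.
Proof. intros Hb Hc. unfold D_term, argk.
set (c := sum_f_R0 (fun m => INR (i m) * INR b ^ m) k).
set (A := INR b ^ S k).
assert (HA : 0 < A) by (apply INRb_pos; auto).
assert (Ha : continuity_pt (fun y => (y + c) / A) x).
{ apply derivable_continuous_pt. exists (/ A). apply dpl_affine. lra. }
assert (H1 := continuity_pt_comp (fun y => (y + c) / A) dpsi x Ha (Hc _)).
assert (H2 := continuity_pt_scal _ (gamma ^ k * / A) x H1).
eapply cont_ext; [|exact H2]. intros y. unfold mult_real_fct, comp. field. lra.
Qed.

Lemma D_cont b gamma dpsi M i x : (2 <= b)%nat -> 0 <= gamma < 1 -> (forall y, Rabs (dpsi y) <= M) ->
  continuity dpsi -> continuity_pt (fun y => D_fun b gamma dpsi y i) x.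
Proof. intros Hb Hg HM Hc.
apply (CVU_continuity (fun n y => sum_f_R0 (D_term b gamma dpsi y i) n) _ x (mkposreal 1 Rlt_0_1)).
- apply D_CVU with M; auto.
- intros n y _. induction n.
  + simpl. apply D_term_cont; auto.
  + simpl. apply (continuity_pt_plus (fun y => sum_f_R0 (D_term b gamma dpsi y i) n) (fun y => D_term b gamma dpsi y i (S n))); auto.
    apply D_term_cont; auto.
- apply Boule_center.
Qed.

Lemma S_cont b gamma psi dpsi M M' i x : (2 <= b)%nat -> 0 <= gamma < 1 ->
  (forall y, Rabs (psi y) <= M) -> (forall y, Rabs (dpsi y) <= M') ->
  (forall x, derivable_pt_lim psi x (dpsi x)) ->
  continuity_pt (fun y => S_fun b gamma psi y i) x.
Proof. intros. apply derivable_continuous_pt. eexists. eapply S_deriv; eauto. Qed.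

Lemma sum_prefix_eq b gamma psi dpsi x i j N :
  (forall m, (m < S N)%nat -> i m = j m) ->
  sum_f_R0 (S_term b gamma psi x i) N = sum_f_R0 (S_term b gamma psi x j) N /\
  sum_f_R0 (D_term b gamma dpsi x i) N = sum_f_R0 (D_term b gamma dpsi x j) N.
Proof. intros H.
assert (Ha : forall k, (k <= N)%nat -> argk b x i k = argk b x j k).
{ intros k Hk. unfold argk. f_equal. f_equal. apply sum_eq. intros m Hm. rewrite H by lia. auto. }
split; apply sum_eq; intros k Hk.
- unfold S_term. fold (argk b x i k). fold (argk b x j k). rewrite Ha; auto.
- unfold D_term. rewrite Ha; auto.
Qed.

Lemma S_agree b gamma psi M x i j N : 0 <= gamma < 1 -> (forall y, Rabs (psi y) <= M) ->
  (forall m, (m < S N)%nat -> i m = j m) ->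
  Rabs (S_fun b gamma psi x i - S_fun b gamma psi x j) <= 2 * M * gamma ^ (S N) / (1 - gamma).
Proof. intros Hg HM H.
destruct (sum_prefix_eq b gamma psi psi x i j N H) as [E _].
destruct (S_spec b gamma psi M x i Hg HM) as [_ T1].
destruct (S_spec b gamma psi M x j Hg HM) as [_ T2].
specialize (T1 N). specialize (T2 N). rewrite E in T1.
replace (S_fun b gamma psi x i - S_fun b gamma psi x j) with
  ((S_fun b gamma psi x i - sum_f_R0 (S_term b gamma psi x j) N) - (S_fun b gamma psi x j - sum_f_R0 (S_term b gamma psi x j) N)) by ring.
eapply Rle_trans; [apply Rabs_triang|]. rewrite Rabs_Ropp.
replace (2 * M * gamma ^ S N / (1 - gamma)) with (M * gamma ^ S N / (1 - gamma) + M * gamma ^ S N / (1 - gamma)) by (field; lra).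
lra. Qed.

Lemma D_agree b gamma dpsi M x i j N : (2 <= b)%nat -> 0 <= gamma < 1 -> (forall y, Rabs (dpsi y) <= M) ->
  (forall m, (m < S N)%nat -> i m = j m) ->
  Rabs (D_fun b gamma dpsi x i - D_fun b gamma dpsi x j) <= 2 * (M / INR b) * (gamma / INR b) ^ (S N) / (1 - gamma / INR b).
Proof. intros Hb Hg HM H.
assert (HB : 2 <= INR b) by (apply (le_INR 2); auto).
assert (Hr : gamma / INR b < 1).
{ apply (Rmult_lt_reg_r (INR b)); [lra|]. unfold Rdiv. rewrite Rmult_assoc, Rinv_l by lra. lra. }
destruct (sum_prefix_eq b gamma dpsi dpsi x i j N H) as [_ E].
destruct (D_spec b gamma dpsi M x i Hb Hg HM) as [_ T1].
destruct (D_spec b gamma dpsi M x j Hb Hg HM) as [_ T2].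
specialize (T1 N). specialize (T2 N). rewrite E in T1.
replace (D_fun b gamma dpsi x i - D_fun b gamma dpsi x j) with
  ((D_fun b gamma dpsi x i - sum_f_R0 (D_term b gamma dpsi x j) N) - (D_fun b gamma dpsi x j - sum_f_R0 (D_term b gamma dpsi x j) N)) by ring.
eapply Rle_trans; [apply Rabs_triang|]. rewrite Rabs_Ropp.
set (T := M / INR b * (gamma / INR b) ^ S N / (1 - gamma / INR b)) in *.
replace (2 * (M / INR b) * (gamma / INR b) ^ S N / (1 - gamma / INR b)) with (T + T) by (unfold T; field; lra).
lra. Qed.

Lemma tangent_iff b gamma psi dpsi M M' e d x i j : (2 <= b)%nat -> 0 <= gamma < 1 ->
  (forall y, Rabs (psi y) <= M) -> (forall y, Rabs (dpsi y) <= M') ->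
  (forall x, derivable_pt_lim psi x (dpsi x)) ->
  (tangent b gamma psi e d x i j <->
   Rabs (S_fun b gamma psi x i - S_fun b gamma psi x j) <= e /\
   Rabs (D_fun b gamma dpsi x i - D_fun b gamma dpsi x j) <= d).
Proof. intros Hb Hg HM HM' Hd.
assert (Di := S_deriv b gamma psi dpsi M M' x i Hb Hg HM HM' Hd).
assert (Dj := S_deriv b gamma psi dpsi M M' x j Hb Hg HM HM' Hd).
unfold tangent. split.
- intros [H1 [di [dj [H2 [H3 H4]]]]]. split; auto.
  rewrite (uniqueness_limite _ _ _ _ H2 Di) in H4. rewrite (uniqueness_limite _ _ _ _ H3 Dj) in H4. auto.
- intros [H1 H2]. split; auto. exists (D_fun b gamma dpsi x i), (D_fun b gamma dpsi x j). auto.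
Qed.

Lemma open_gt (g : R -> R) e : (forall x, continuity_pt g x) -> openR (fun x => g x > e).
Proof. intros Hc x Hx. apply cont_gt; auto. Qed.

Lemma cont_absdiff f g x : continuity_pt f x -> continuity_pt g x -> continuity_pt (fun y => Rabs (f y - g y)) x.
Proof. intros Hf Hg. assert (H := continuity_pt_minus f g x Hf Hg).
assert (H2 := continuity_pt_comp (minus_fct f g) Rabs x H (Rcontinuity_abs _)).
eapply cont_ext; [|exact H2]. intros y; reflexivity. Qed.

Lemma Borel_tangent b gamma psi dpsi M M' e d i j : (2 <= b)%nat -> 0 <= gamma < 1 ->
  (forall y, Rabs (psi y) <= M) -> (forall y, Rabs (dpsi y) <= M') ->
  (forall x, derivable_pt_lim psi x (dpsi x)) -> continuity dpsi ->
  Borel (fun x => tangent b gamma psi e d x i j).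
Proof. intros Hb Hg HM HM' Hd Hc.
apply (Borel_ext (fun x => ~ (Rabs (S_fun b gamma psi x i - S_fun b gamma psi x j) > e \/
   Rabs (D_fun b gamma dpsi x i - D_fun b gamma dpsi x j) > d))).
- apply Borel_compl, Borel_or; apply Borel_open, open_gt; intros x; apply cont_absdiff.
  + eapply S_cont; eauto.
  + eapply S_cont; eauto.
  + eapply D_cont; eauto.
  + eapply D_cont; eauto.
- intros x. rewrite (tangent_iff b gamma psi dpsi M M' e d x i j); auto. split; intros H.
  + split; apply Rnot_lt_le; intro; apply H; auto.
  + destruct H. intros [H1|H1]; lra.
Qed.

Lemma words_spec b q l : In l (words b q) <-> word b q l.
Proof. revert l. induction q; intros l; simpl.
- unfold word. split.
  + intros [<-|[]]. split; auto.
  + intros [H _]. destruct l; [auto|discriminate].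
- rewrite in_flat_map. split.
  + intros [d [Hd Hl]]. apply in_seq in Hd. apply in_map_iff in Hl. destruct Hl as [w [<- Hw]].
    apply IHq in Hw. destruct Hw as [H1 H2]. split; simpl; auto. constructor; auto; lia.
  + intros [H1 H2]. destruct l as [|d w]; [discriminate|]. inversion H2; subst.
    exists d. split. apply in_seq; lia. apply in_map. apply IHq. split; auto.
Qed.

Lemma NoDup_map_cons d (l : list (list nat)) : NoDup l -> NoDup (map (cons d) l).
Proof. induction 1; simpl; constructor; auto.
intros Hin. apply in_map_iff in Hin. destruct Hin as [y [E Hy]]. inversion E; subst; auto. Qed.

Lemma words_NoDup b q : NoDup (words b q).
Proof. induction q; simpl. constructor; auto. constructor.
assert (Hs : forall s, NoDup s -> NoDup (flat_map (fun d => map (cons d) (words b q)) s)).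
{ induction 1; simpl. constructor. apply NoDup_app; auto. apply NoDup_map_cons; auto.
  intros a Ha Hb. apply in_map_iff in Ha. destruct Ha as [w [<- _]].
  apply in_flat_map in Hb. destruct Hb as [d [Hd Hw]]. apply in_map_iff in Hw. destruct Hw as [w' [E _]].
  inversion E; subst; auto. }
apply Hs, seq_NoDup. Qed.

Lemma le_fold_max (l : list nat) y : In y l -> (y <= fold_right Nat.max 0 l)%nat.
Proof. induction l; simpl; [tauto|]. intros [<-|H]; [lia|]. specialize (IHl H). lia. Qed.

Lemma decP_true (P : Prop) : P -> decP P = true.
Proof. intros H. unfold decP. destruct (excluded_middle_informative P); tauto. Qed.

Lemma e_num_ge b gamma psi q x e d u (s : list (list nat)) :
  In u (words b q) -> NoDup s -> (forall v, In v s -> In v (words b q) /\ inE b gamma psi q x e d u v) ->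
  (length s <= e_num b gamma psi q x e d)%nat.
Proof. intros Hu Hs Hv. unfold e_num.
eapply Nat.le_trans; [|apply le_fold_max; apply in_map_iff; exists u; split; [reflexivity|exact Hu]].
apply NoDup_incl_length; auto. intros v Hin. apply filter_In. destruct (Hv v Hin). split; auto.
apply decP_true; auto. Qed.

Definition lsum {T} (f : T -> R) (l : list T) := fold_right Rplus 0 (map f l).

Lemma lsum_zero {T} (f : T -> R) l : (forall y, In y l -> f y = 0) -> lsum f l = 0.
Proof. induction l; simpl; auto. intros H. unfold lsum in *; simpl. rewrite H by auto. rewrite IHl; [ring|]. intros; apply H; auto. Qed.

Lemma lsum_single (f : list nat -> R) l a : NoDup l -> In a l -> (forall y, In y l -> y <> a -> f y = 0) ->
  lsum f l = f a.
Proof. induction 1; simpl; [tauto|]. intros Ha Hz. unfold lsum; simpl. fold (lsum f l).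
destruct (list_eq_dec Nat.eq_dec x a) as [->|Hne].
- rewrite lsum_zero; [ring|]. intros y Hy. apply Hz; auto. intros ->; auto.
- rewrite Hz; auto. rewrite IHNoDup. ring. destruct Ha; [congruence|auto]. intros; apply Hz; auto.
Qed.

Lemma lsum_two (f : list nat -> R) l a c : NoDup l -> In a l -> In c l -> a <> c ->
  (forall y, In y l -> y <> a -> y <> c -> f y = 0) -> lsum f l = f a + f c.
Proof. induction 1; simpl; [tauto|]. intros Ha Hc Hac Hz. unfold lsum; simpl. fold (lsum f l).
destruct (list_eq_dec Nat.eq_dec x a) as [->|Hne].
- rewrite (lsum_single f l c); auto. destruct Hc; [congruence|auto].
  intros y Hy Hyc. apply Hz; auto. intros ->; auto.
- destruct (list_eq_dec Nat.eq_dec x c) as [->|Hne'].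
  + rewrite (lsum_single f l a); auto. ring. destruct Ha; [congruence|auto].
    intros y Hy Hya. apply Hz; auto. intros ->; auto.
  + rewrite Hz; auto. rewrite IHNoDup; auto. ring. destruct Ha; [congruence|auto]. destruct Hc; [congruence|auto].
Qed.

Lemma fold_Rmax_le l c : 0 <= c -> (forall y, In y l -> y <= c) -> fold_right Rmax 0 l <= c.
Proof. induction l; simpl; auto. intros Hc H. apply Rmax_lub; auto. Qed.

Definition zseq : nat -> nat := fun _ => 0%nat.

Definition Fset b gamma psi L e d x (u v : list nat) : Prop :=
  exists a c, In a (words b L) /\ In c (words b L) /\
    tangent b gamma psi e d x (Defs.concat u (Defs.concat a zseq)) (Defs.concat v (Defs.concat c zseq)).

Definition phi := (sqrt 5 + 1) / 2.

Lemma phi_facts : 3 / 2 <= phi <= 2 /\ phi * phi = phi + 1 /\ / phi = phi - 1.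
Proof.
assert (H5 : sqrt 5 * sqrt 5 = 5) by (apply sqrt_sqrt; lra).
assert (Hs : 0 <= sqrt 5) by apply sqrt_pos.
assert (2 <= sqrt 5 <= 3) by (split; nra).
assert (Hp : phi * phi = phi + 1) by (unfold phi; nra).
split; [unfold phi; lra|]. split; auto.
assert (3 / 2 <= phi) by (unfold phi; lra).
apply (Rmult_eq_reg_l phi); [|lra]. rewrite Rinv_r by lra. nra.
Qed.

Definition omg (K : R -> Prop) (y : R) : R :=
  if excluded_middle_informative (K y) then 1 else / phi.

Definition gval (A C : Prop) : R :=
  if excluded_middle_informative A then (if excluded_middle_informative C then 1 else phi)
  else (if excluded_middle_informative C then / phi else 1).

Definition Vf b gamma psi L e d (K : R -> Prop) (x : R) (u v : list nat) : R :=
  if excluded_middle_informative (u = v) then 1 else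
  if excluded_middle_informative (Fset b gamma psi L e d x u v) then gval (K (xmap b x u)) (K (xmap b x v))
  else 0.

Lemma gval_prod A C : gval A C * gval C A = 1.
Proof. destruct phi_facts as [H1 [H2 H3]]. unfold gval.
destruct (excluded_middle_informative A); destruct (excluded_middle_informative C); try lra;
rewrite H3; nra. Qed.

Lemma gval_nonneg A C : 0 <= gval A C.
Proof. destruct phi_facts as [H1 [H2 H3]]. unfold gval.
destruct (excluded_middle_informative A); destruct (excluded_middle_informative C); lra. Qed.

Lemma Vf_nonneg b gamma psi L e d K x u v : 0 <= Vf b gamma psi L e d K x u v.
Proof. unfold Vf. destruct (excluded_middle_informative (u = v)); [lra|].
destruct (excluded_middle_informative _); [apply gval_nonneg|lra]. Qed.

Lemma omg_pos K y : 0 < omg K y.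
Proof. destruct phi_facts as [H1 [H2 H3]]. unfold omg. destruct (excluded_middle_informative (K y)); lra. Qed.

Lemma omg_ratio K y z : omg K y / omg K z <= phi.
Proof. destruct phi_facts as [H1 [H2 H3]]. unfold omg.
assert (0 < / phi) by (apply Rinv_0_lt_compat; lra).
destruct (excluded_middle_informative (K y)); destruct (excluded_middle_informative (K z)); unfold Rdiv.
- rewrite Rinv_1; lra.
- rewrite Rinv_inv; lra.
- rewrite Rinv_1, H3; lra.
- rewrite Rinv_r; lra.
Qed.

Lemma Borel_if_fun (P : R -> Prop) (B : R -> Prop) (f g : R -> R) :
  Borel P -> Borel (fun x => B (f x)) -> Borel (fun x => B (g x)) ->
  Borel (fun x => B (if excluded_middle_informative (P x) then f x else g x)).
Proof. intros HP Hf Hg. apply (Borel_ext _ _ (Borel_if P _ _ HP Hf Hg)).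
intros x. destruct (excluded_middle_informative (P x)); tauto. Qed.

Lemma Borel_xmap_K b K u : (2 <= b)%nat -> Borel K -> Borel (fun x => K (xmap b x u)).
Proof. intros Hb HK. unfold xmap. apply Borel_affine; auto. apply INRb_pos; auto. Qed.

Lemma Borel_omg K B : Borel K -> Borel (fun x => B (omg K x)).
Proof. intros HK. unfold omg. apply (Borel_if_fun K B (fun _ => 1) (fun _ => / phi)); auto; apply Borel_const. Qed.

Lemma Borel_gval (P Q : R -> Prop) B : Borel P -> Borel Q -> Borel (fun x => B (gval (P x) (Q x))).
Proof. intros HP HQ. unfold gval.
apply (Borel_if_fun P B (fun x => if excluded_middle_informative (Q x) then 1 else phi)
   (fun x => if excluded_middle_informative (Q x) then / phi else 1)); auto;
apply (Borel_if_fun Q B (fun _ => _) (fun _ => _)); auto; apply Borel_const. Qed.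

Lemma Borel_F b gamma psi dpsi M M' L e d u v : (2 <= b)%nat -> 0 <= gamma < 1 ->
  (forall y, Rabs (psi y) <= M) -> (forall y, Rabs (dpsi y) <= M') ->
  (forall x, derivable_pt_lim psi x (dpsi x)) -> continuity dpsi ->
  Borel (fun x => Fset b gamma psi L e d x u v).
Proof. intros. unfold Fset.
apply (Borel_ext (fun x => exists a, In a (words b L) /\ (exists c, In c (words b L) /\
   tangent b gamma psi e d x (Defs.concat u (Defs.concat a zseq)) (Defs.concat v (Defs.concat c zseq))))).
- apply Borel_exists_list. intros a _. apply Borel_exists_list. intros c _. eapply Borel_tangent; eauto.
- intros x; split; [intros [a [Ha [c [Hc H5]]]]|intros [a [c [Ha [Hc H5]]]]]; eauto 6.
Qed.

Lemma Borel_V b gamma psi dpsi M M' L e d K u v B : (2 <= b)%nat -> 0 <= gamma < 1 ->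
  (forall y, Rabs (psi y) <= M) -> (forall y, Rabs (dpsi y) <= M') ->
  (forall x, derivable_pt_lim psi x (dpsi x)) -> continuity dpsi -> Borel K ->
  Borel (fun x => B (Vf b gamma psi L e d K x u v)).
Proof. intros. unfold Vf.
apply (Borel_if_fun (fun _ => u = v) B (fun _ => 1)); [apply Borel_const|apply Borel_const|].
apply (Borel_if_fun (fun x => Fset b gamma psi L e d x u v) B); [eapply Borel_F; eauto| |apply Borel_const].
apply Borel_gval; apply Borel_xmap_K; auto.
Qed.

Lemma null_empty (A : R -> Prop) : (forall x, ~ A x) -> null_set A.
Proof. intros H eps He. exists (fun _ => 0), (fun _ => 0). split; [intros; lra|]. split.
- intros x Ax; destruct (H x Ax).
- intros N. induction N; simpl; lra. Qed.

Lemma Borel_leb A : Borel A -> leb_measurable A.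
Proof. intros H. exists A, (fun _ => False). split; auto. split.
- apply null_empty; auto.
- intros x; tauto. Qed.

Lemma abs_split x a : Rabs x <= a -> - a <= x <= a.
Proof. intros H. pose proof (Rle_abs x). pose proof (Rle_abs (- x)). rewrite Rabs_Ropp in H1. lra. Qed.

Lemma word_digit b L a : In a (words b L) -> (2 <= b)%nat -> digit_seq b (Defs.concat a zseq).
Proof. intros Ha Hb n. apply words_spec in Ha. destruct Ha as [_ Ha]. unfold Defs.concat.
destruct (Nat.ltb n (length a)) eqn:E.
- apply Nat.ltb_lt in E. rewrite Forall_forall in Ha. apply Ha. apply nth_In; auto.
- unfold zseq; lia. Qed.

Lemma F_sub_E b gamma psi q L e d x u v : (2 <= b)%nat -> word b q u -> word b q v ->
  Fset b gamma psi L e d x u v -> inE b gamma psi q x e d u v.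
Proof. intros Hb Hu Hv [a [c [Ha [Hc T]]]]. split; auto. split; auto.
exists (Defs.concat a zseq), (Defs.concat c zseq). split; [|split]; auto; eapply word_digit; eauto. Qed.

Lemma tangent_sym b gamma psi e d x i j : tangent b gamma psi e d x i j -> tangent b gamma psi e d x j i.
Proof. intros [H1 [di [dj [H2 [H3 H4]]]]]. split. rewrite Rabs_minus_sym; auto.
exists dj, di. split; auto. split; auto. rewrite Rabs_minus_sym; auto. Qed.

Lemma inE_sym b gamma psi q x e d u v : inE b gamma psi q x e d u v -> inE b gamma psi q x e d v u.
Proof. intros [Hu [Hv [u' [v' [H1 [H2 H3]]]]]]. split; auto. split; auto. exists v', u'.
split; auto. split; auto. apply tangent_sym; auto. Qed.

Lemma inE_diag b gamma psi q x e d u v : 0 <= e -> 0 <= d -> inE b gamma psi q x e d u v -> inE b gamma psi q x e d u u.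
Proof. intros He Hd [Hu [Hv [u' [v' [H1 [H2 [H3 [di [dj [H4 [H5 H6]]]]]]]]]]]. split; auto. split; auto.
exists u', u'. split; auto. split; auto. split.
- unfold Rminus; rewrite Rplus_opp_r, Rabs_R0; auto.
- exists di, di. split; auto. split; auto. unfold Rminus; rewrite Rplus_opp_r, Rabs_R0; auto. Qed.

Lemma concat_trunc (u : list nat) (w : nat -> nat) L m : (m < length u + L)%nat ->
  Defs.concat u (Defs.concat (map w (seq 0 L)) zseq) m = Defs.concat u w m.
Proof. intros Hm. unfold Defs.concat. destruct (Nat.ltb m (length u)) eqn:E; auto.
apply Nat.ltb_ge in E. rewrite length_map, length_seq.
replace (Nat.ltb (m - length u) L) with true by (symmetry; apply Nat.ltb_lt; lia).
rewrite (nth_indep _ _ (w 0%nat)) by (rewrite length_map, length_seq; lia).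
rewrite map_nth, seq_nth by lia. f_equal. Qed.

Lemma trunc_word b L (w : nat -> nat) : digit_seq b w -> In (map w (seq 0 L)) (words b L).
Proof. intros Hw. apply words_spec. split. rewrite length_map, length_seq; auto.
apply Forall_forall. intros y Hy. apply in_map_iff in Hy. destruct Hy as [k [<- _]]. apply Hw. Qed.

Lemma E_sub_F b gamma psi dpsi M M' q L e d x u v : (2 <= b)%nat -> 0 <= gamma < 1 ->
  (forall y, Rabs (psi y) <= M) -> (forall y, Rabs (dpsi y) <= M') ->
  (forall x, derivable_pt_lim psi x (dpsi x)) ->
  (forall i j, (forall m, (m < q + L)%nat -> i m = j m) ->
     Rabs (S_fun b gamma psi x i - S_fun b gamma psi x j) <= e / 4 /\
     Rabs (D_fun b gamma dpsi x i - D_fun b gamma dpsi x j) <= d / 4) ->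
  inE b gamma psi q x (e / 2) (d / 2) u v -> Fset b gamma psi L e d x u v.
Proof. intros Hb Hg HM HM' Hd Hagr [Hu [Hv [u' [v' [Du [Dv T]]]]]].
rewrite (tangent_iff b gamma psi dpsi M M') in T by auto. destruct T as [T1 T2].
exists (map u' (seq 0 L)), (map v' (seq 0 L)).
split; [apply trunc_word; auto|]. split; [apply trunc_word; auto|].
rewrite (tangent_iff b gamma psi dpsi M M') by auto.
destruct Hu as [Hu _]. destruct Hv as [Hv _].
destruct (Hagr (Defs.concat u (Defs.concat (map u' (seq 0 L)) zseq)) (Defs.concat u u')) as [A1 A2].
{ intros m Hm. apply concat_trunc. lia. }
destruct (Hagr (Defs.concat v (Defs.concat (map v' (seq 0 L)) zseq)) (Defs.concat v v')) as [B1 B2].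
{ intros m Hm. apply concat_trunc. lia. }
apply abs_split in T1, T2, A1, A2, B1, B2.
split; apply Rabs_le; lra.
Qed.

Lemma Vf_diag b gamma psi L e d K x u : Vf b gamma psi L e d K x u u = 1.
Proof. unfold Vf. destruct (excluded_middle_informative (u = u)); tauto. Qed.
Lemma Vf_off b gamma psi L e d K x u v : u <> v -> Fset b gamma psi L e d x u v ->
  Vf b gamma psi L e d K x u v = gval (K (xmap b x u)) (K (xmap b x v)).
Proof. intros H1 H2. unfold Vf. destruct (excluded_middle_informative (u = v)); [tauto|].
destruct (excluded_middle_informative _); tauto. Qed.
Lemma Vf_zero b gamma psi L e d K x u v : u <> v -> ~ Fset b gamma psi L e d x u v ->
  Vf b gamma psi L e d K x u v = 0.
Proof. intros H1 H2. unfold Vf. destruct (excluded_middle_informative (u = v)); [tauto|].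
destruct (excluded_middle_informative _); tauto. Qed.
Lemma omg_in (K : R -> Prop) y : K y -> omg K y = 1.
Proof. unfold omg. destruct (excluded_middle_informative (K y)); tauto. Qed.
Lemma omg_out (K : R -> Prop) y : ~ K y -> omg K y = / phi.
Proof. unfold omg. destruct (excluded_middle_informative (K y)); tauto. Qed.
Lemma gval_T (A C : Prop) : A -> gval A C <= phi.
Proof. destruct phi_facts as [H1 [H2 H3]]. unfold gval. destruct (excluded_middle_informative A); [|tauto].
destruct (excluded_middle_informative C); lra. Qed.
Lemma gval_FT (A C : Prop) : ~ A -> C -> gval A C = / phi.
Proof. unfold gval. destruct (excluded_middle_informative A); [tauto|].
destruct (excluded_middle_informative C); tauto. Qed.

Lemma Sigma_bound b gamma psi q L eps delta (K : R -> Prop) x :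
  (2 <= b)%nat -> 0 < eps -> 0 < delta ->
  (forall x, 0 <= x < 1 -> K x -> (e_num b gamma psi q x eps delta <= 1)%nat) ->
  (forall x, 0 <= x < 1 -> ~ K x -> (e_num b gamma psi q x eps delta <= 2)%nat) ->
  (forall x u v, 0 <= x < 1 -> ~ K x ->
           inE b gamma psi q x eps delta u v -> u <> v ->
           K (xmap b x u) \/ K (xmap b x v)) ->
  0 <= x < 1 ->
  Sigma b q (omg K) (Vf b gamma psi L eps delta K) x <= phi.
Proof. intros Hb He Hd hi1 hi2 hii Hx.
destruct phi_facts as [P1 [P2 P3]].
assert (Pinv : 0 < / phi) by (apply Rinv_0_lt_compat; lra).
unfold Sigma. apply fold_Rmax_le; [lra|]. intros y Hy. apply in_map_iff in Hy. destruct Hy as [u [<- Hu]].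
set (W := words b q) in *.
assert (HW : forall w, In w W -> word b q w) by (intros; apply words_spec; auto).
change (fold_right Rplus 0 (map (fun v => Vf b gamma psi L eps delta K x u v) W)) with
   (lsum (Vf b gamma psi L eps delta K x u) W).
assert (HND : NoDup W) by apply words_NoDup.
destruct (classic (exists v, In v W /\ v <> u /\ Fset b gamma psi L eps delta x u v)) as [[v0 [Hv0 [Hne HF]]]|Hno].
- assert (E0 : inE b gamma psi q x eps delta u v0) by (apply F_sub_E with L; auto).
  assert (E1 : inE b gamma psi q x eps delta u u) by (eapply inE_diag; eauto; lra).
  destruct (classic (K x)) as [Kx|Kx].
  + exfalso. assert (2 <= e_num b gamma psi q x eps delta)%nat.
    { apply (e_num_ge b gamma psi q x eps delta u [u; v0]); auto.
      - constructor; [simpl; intros [H|[]]; auto|]. constructor; auto; constructor.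
      - intros w [<-|[<-|[]]]; split; auto. }
    specialize (hi1 x Hx Kx). lia.
  + assert (Huniq : forall w, In w W -> w <> u -> w <> v0 -> ~ Fset b gamma psi L eps delta x u w).
    { intros w Hw H1 H2 HFw. assert (E2 : inE b gamma psi q x eps delta u w) by (apply F_sub_E with L; auto).
      assert (3 <= e_num b gamma psi q x eps delta)%nat.
      { apply (e_num_ge b gamma psi q x eps delta u [u; v0; w]); auto.
        - constructor. simpl; intros [H|[H|[]]]; auto.
          constructor. simpl; intros [H|[]]; auto. constructor; auto; constructor.
        - intros w' [<-|[<-|[<-|[]]]]; split; auto. }
      specialize (hi2 x Hx Kx). lia. }
    rewrite (lsum_two _ W u v0); auto.
    2:{ intros w Hw H1 H2. apply Vf_zero; auto. }
    rewrite Vf_diag, Vf_off by auto. rewrite (omg_out K x Kx).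
    destruct (hii x u v0 Hx Kx E0 (fun h => Hne (eq_sym h))) as [Ku|Kv].
    * rewrite (omg_in K _ Ku). pose proof (gval_T _ (K (xmap b x v0)) Ku).
      unfold Rdiv. rewrite Rinv_1, Rmult_1_r, P3. rewrite P3 in Pinv. nra.
    * destruct (classic (K (xmap b x u))) as [Ku|Ku].
      -- rewrite (omg_in K _ Ku). pose proof (gval_T _ (K (xmap b x v0)) Ku).
         unfold Rdiv. rewrite Rinv_1, Rmult_1_r, P3. rewrite P3 in Pinv. nra.
      -- rewrite (omg_out K _ Ku), (gval_FT _ _ Ku Kv). unfold Rdiv. rewrite Rinv_r by lra. lra.
- rewrite (lsum_single _ W u); auto.
  2:{ intros w Hw H1. apply Vf_zero; auto. intro HF. apply Hno. exists w; auto. }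
  rewrite Vf_diag, Rmult_1_r. apply omg_ratio.
Qed.

Theorem lemma2p11
  (b : nat) (hb : (2 <= b)%nat)
  (gamma : R) (hgamma : / INR b < gamma < 1)
  (psi : R -> R) (hper : forall x, psi (x + 1) = psi x)
  (hC1 : exists dpsi : R -> R,
           (forall x, derivable_pt_lim psi x (dpsi x)) /\ continuity dpsi)
  (q : nat) (hq : (1 <= q)%nat)
  (eps delta : R) (heps : 0 < eps) (hdelta : 0 < delta)
  (K : R -> Prop) (hKB : Borel K) (hK01 : forall x, K x -> 0 <= x < 1)
  (hi1 : forall x, 0 <= x < 1 -> K x -> (e_num b gamma psi q x eps delta <= 1)%nat)
  (hi2 : forall x, 0 <= x < 1 -> ~ K x -> (e_num b gamma psi q x eps delta <= 2)%nat)
  (hii : forall x u v, 0 <= x < 1 -> ~ K x ->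
           inE b gamma psi q x eps delta u v -> u <> v ->
           K (xmap b x u) \/ K (xmap b x v)) :
  sigma_le b gamma psi q ((sqrt 5 + 1) / 2).
Proof.
destruct hC1 as [dpsi [Hd Hc]].
assert (Hcpsi : forall x, continuity_pt psi x).
{ intros x. apply derivable_continuous_pt. exact (exist _ (dpsi x) (Hd x)). }
destruct (periodic_bounded psi hper Hcpsi) as [M HM].
destruct (periodic_bounded dpsi (deriv_periodic psi dpsi hper Hd) Hc) as [M' HM'].
assert (HB : 2 <= INR b) by (apply (le_INR 2); auto).
assert (Hg : 0 <= gamma < 1). { assert (0 < / INR b) by (apply Rinv_0_lt_compat; lra). lra. }
assert (Hr : 0 <= gamma / INR b < 1).
{ split. apply Rdiv_le_0_compat; lra. apply (Rmult_lt_reg_r (INR b)); [lra|]. unfold Rdiv. rewrite Rmult_assoc, Rinv_l by lra. lra. }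
assert (HM0 : 0 <= M) by (eapply Mpos_of; eauto).
assert (HM0' : 0 <= M') by (eapply Mpos_of; eauto).
destruct (small_tail (2 * M) gamma ltac:(lra) Hg (eps / 4) ltac:(lra)) as [N0 HN0].
destruct (small_tail (2 * (M' / INR b)) (gamma / INR b) ltac:(apply Rmult_le_pos; [lra|apply Rdiv_le_0_compat; lra]) Hr (delta / 4) ltac:(lra)) as [N1 HN1].
set (L := max N0 N1).
assert (Hagr : forall x i j, (forall m, (m < q + L)%nat -> i m = j m) ->
     Rabs (S_fun b gamma psi x i - S_fun b gamma psi x j) <= eps / 4 /\
     Rabs (D_fun b gamma dpsi x i - D_fun b gamma dpsi x j) <= delta / 4).
{ intros x i j H. assert (H' : forall m, (m < S (q + L - 1))%nat -> i m = j m) by (intros; apply H; lia).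
  split.
  - eapply Rle_trans; [apply (S_agree b gamma psi M x i j _ Hg HM H')|].
    left. apply HN0. unfold L; lia.
  - eapply Rle_trans; [apply (D_agree b gamma dpsi M' x i j _ hb Hg HM' H')|].
    left. apply HN1. unfold L; lia. }
destruct phi_facts as [P1 [P2 P3]].
assert (Pinv : 0 < / phi) by (apply Rinv_0_lt_compat; lra).
intros eta Heta.
exists (omg K), (Vf b gamma psi L eps delta K).
split; [|split].
-
  split; [|split].
  + intros B HBo. apply Borel_leb. apply Borel_and; [apply Borel_01|apply Borel_omg; auto].
  + intros; apply omg_pos.
  + exists phi. intros x _. unfold omg. destruct (excluded_middle_informative (K x)).
    * rewrite Rinv_1. lra.
    * rewrite Rinv_inv. lra.
-
  split; [|split].
  + intros u v _ _ B HBo. apply Borel_leb. apply Borel_and; [apply Borel_01|].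
    eapply Borel_V; eauto.
  + intros; apply Vf_nonneg.
  + exists (eps / 2), (delta / 2). split; [lra|]. split; [lra|].
    intros x u v Hx HE.
    destruct (list_eq_dec Nat.eq_dec u v) as [<-|Hne].
    * rewrite Vf_diag. lra.
    * assert (F1 : Fset b gamma psi L eps delta x u v) by (eapply E_sub_F; eauto).
      assert (F2 : Fset b gamma psi L eps delta x v u) by (eapply E_sub_F; eauto; apply inE_sym; auto).
      rewrite (Vf_off _ _ _ _ _ _ _ _ u v Hne F1), (Vf_off _ _ _ _ _ _ _ _ v u (fun h => Hne (eq_sym h)) F2).
      rewrite gval_prod. lra.
- apply null_empty. intros x [Hx H].
  pose proof (Sigma_bound b gamma psi q L eps delta K x hb heps hdelta hi1 hi2 hii Hx).
  fold phi in H. lra.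
Qed.
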